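(* Let $G$ be a discrete abelian group (written additively), $\alpha\in\mathcal C_c(G,\mathbf k)$, and consider the convolution equation $\sigma(s)=\alpha\star s$, i.e. $s_g^{(t+1)}=\sum_{h\in G}\alpha_h^{(t)}s_{g-h}^{(t)}$. Let ${\rm Sol}_c(\alpha,L^c)$ be the complex vector space of its solutions $s\in\mathcal C(G,{\rm Seq}(\mathbf C))$ such that each $s^{(t)}$ has finite support. Then the Fourier transform $\mathcal F(s)=\sum_{g\in G}s_g\,e^{ig\theta}$ is an isomorphism of $G$-modules from ${\rm Sol}_c(\alpha,L^c)$ onto $$\Big(\prod_{\tau=0}^{t-1}\hat\alpha_\theta^{(\tau)}\Big)\cdot\mathbf C[e^{ig\theta}: g\in G]\subset{\rm Seq}(\mathbf C)[e^{ig\theta}:g\in G],$$ i.e. onto the set of products of the fixed sequence-valued Fourier polynomial $t\mapsto\prod_{\tau=0}^{t-1}\hat\alpha^{(\tau)}_\theta$ with complex Fourier polynomials.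
   Context: ${\rm Seq}(\mathbf C)$ is the ring of complex sequences indexed by $t\in\mathbf Z_{\ge0}$ with shift $\sigma(x)^{(t)}=x^{(t+1)}$; $\mathbf k\subseteq{\rm Seq}(\mathbf C)$ is a $\sigma$-stable subring with constants $\mathbf C$. $\mathcal C_c(G,\mathbf k)$ denotes finitely supported functions $G\to\mathbf k$. For $g\in G$, $e^{ig\theta}$ denotes the function on the dual group $\widehat G={\rm Hom}(G,\mathbf S^1)$ given by $\rho\mapsto\rho(g)$; for a ring $R$, $R[e^{ig\theta}:g\in G]$ is the ring of finite sums $\sum c_g e^{ig\theta}$, $c_g\in R$, with $e^{ig\theta}e^{ih\theta}=e^{i(g+h)\theta}$ (Fourier polynomials). $\hat\alpha^{(\tau)}_\theta=\sum_g\alpha^{(\tau)}_g e^{ig\theta}$. $G$ acts on functions by $(s\star h)_g=s_{g-h}$ and on Fourier polynomials by $e^{ig\theta}\star h=e^{i(g+h)\theta}$. $L^c$ is the smallest $\sigma$-subring of ${\rm Seq}(\mathbf C)$ containing $\mathbf k$ and all values of finite-support solutions. *)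

(* Defs.v *)
From HB Require Import structures.
From mathcomp Require Import all_boot all_order all_algebra.
From mathcomp Require Import classical_sets fsbigop reals.
From mathcomp Require Import complex.
Set Implicit Arguments. Unset Strict Implicit. Unset Printing Implicit Defensive.
Import Order.TTheory GRing.Theory Num.Theory.
Local Open Scope ring_scope.

Definition CC (R : realType) := complex R.

Definition Seq (R : realType) := nat -> CC R.
Definition sshift (R : realType) (x : Seq R) : Seq R := fun t => x t.+1.

Definition sigma_subring (R : realType) (S : Seq R -> Prop) : Prop :=
  [/\ S (fun _ => 1),
      (forall x y, S x -> S y -> S (fun t => x t - y t)),
      (forall x y, S x -> S y -> S (fun t => x t * y t)) &
      (forall x, S x -> S (sshift x))].

Definition sigma_ring_with_constants_C (R : realType) (k : Seq R -> Prop) :=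
  sigma_subring k /\
  (forall x : Seq R, (k x /\ sshift x = x) <-> exists c : CC R, x = fun _ => c).

Definition fin_supp (G : zmodType) (V : zmodType) (f : G -> V) : Prop :=
  exists S : seq G, forall g, f g != 0 -> g \in S.

Definition fin_supp_seq (R : realType) (G : zmodType) (f : G -> Seq R) : Prop :=
  exists S : seq G, forall g, ~ (f g = fun _ => 0) -> g \in S.

(* Fourier polynomials C[e^{ig theta} : g in G] are represented by their
   coefficient functions G -> C with finite support (group algebra);
   product = convolution (e^{ig}e^{ih} = e^{i(g+h)}). *)
Definition fconv (R : realType) (G : zmodType) (p q : G -> CC R) : G -> CC R :=
  fun g => (\sum_(h \in [set: G]) p h * q (g - h))%R.

Definition fdelta0 (R : realType) (G : zmodType) : G -> CC R :=
  fun g => if g == 0 then 1 else 0.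

(* hat alpha^{(tau)}_theta = sum_g alpha^{(tau)}_g e^{ig theta} *)
Definition alpha_hat (R : realType) (G : zmodType) (alpha : G -> Seq R)
  (tau : nat) : G -> CC R := fun g => alpha g tau.

Fixpoint alpha_prod (R : realType) (G : zmodType) (alpha : G -> Seq R)
  (t : nat) : G -> CC R :=
  match t with
  | 0 => @fdelta0 R G
  | t'.+1 => fconv (alpha_prod alpha t') (alpha_hat alpha t')
  end.

Definition is_solution (R : realType) (G : zmodType) (alpha s : G -> Seq R) :=
  forall g t, s g t.+1 = (\sum_(h \in [set: G]) alpha h t * s (g - h) t)%R.

Definition fin_supp_each (R : realType) (G : zmodType) (s : G -> Seq R) :=
  forall t, fin_supp (fun g => s g t).

Definition fin_solution (R : realType) (G : zmodType) (alpha s : G -> Seq R) :=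
  is_solution alpha s /\ fin_supp_each s.

Definition Lc (R : realType) (G : zmodType) (k : Seq R -> Prop)
  (alpha : G -> Seq R) (x : Seq R) : Prop :=
  forall S : Seq R -> Prop, sigma_subring S ->
    (forall y, k y -> S y) ->
    (forall s g, fin_solution alpha s -> S (s g)) -> S x.

Definition Sol_c (R : realType) (G : zmodType) (k : Seq R -> Prop)
  (alpha : G -> Seq R) (s : G -> Seq R) : Prop :=
  fin_solution alpha s /\ forall g, Lc k alpha (s g).

(* Fourier transform: F(s) = sum_g s_g e^{ig theta}, a sequence (indexed by t)
   of Fourier polynomials, coefficient of e^{ig theta} at time t is s_g^{(t)}. *)
Definition fourier (R : realType) (G : zmodType) (s : G -> Seq R) :
  nat -> G -> CC R := fun t g => s g t.

(* G-actions: (s * h)_g = s_{g-h};  e^{ig theta} * h = e^{i(g+h) theta}. *)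
Definition gact_sol (R : realType) (G : zmodType) (s : G -> Seq R) (h : G) :
  G -> Seq R := fun g => s (g - h).
Definition gact_four (R : realType) (G : zmodType) (P : nat -> G -> CC R) (h : G) :
  nat -> G -> CC R := fun t g => P t (g - h).

(* Main.v *)
Require Import Defs.
From HB Require Import structures.
From mathcomp Require Import all_boot all_order all_algebra.
From mathcomp Require Import classical_sets fsbigop reals.
From mathcomp Require Import complex.
From mathcomp Require Import boolp.
Import GRing.Theory.
Local Open Scope ring_scope.

Section Aux.
Variables (R : realType) (G : zmodType).
Local Notation C := (CC R).

Lemma fsumE (F : G -> C) (r : seq G) : uniq r ->
  (forall g, F g != 0 -> g \in r) ->
  \sum_(h \in [set: G]) F h = \sum_(h <- r) F h.
Proof.
move=> ur Hr; rewrite (fsbigE r) //.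
  by apply: eq_bigl => h; rewrite in_setT.
move=> i _ ni; apply/eqP; apply: contraNT ni; exact: Hr.
Qed.

Lemma supp_mull (a b : G -> C) (r : seq G) :
  (forall g, a g != 0 -> g \in r) -> forall g, a g * b g != 0 -> g \in r.
Proof.
move=> H g; case: (eqVneq (a g) 0) => [->|/H//]; by rewrite mul0r eqxx.
Qed.

Lemma supp_mulr (a b : G -> C) (r : seq G) :
  (forall g, b g != 0 -> g \in r) -> forall g, a g * b g != 0 -> g \in r.
Proof.
move=> H g; case: (eqVneq (b g) 0) => [->|/H//]; by rewrite mulr0 eqxx.
Qed.

Lemma conv_supp (p q : G -> C) (Sp Sq : seq G) :
  (forall g, p g != 0 -> g \in Sp) -> (forall g, q g != 0 -> g \in Sq) ->
  forall g, fconv p q g != 0 -> g \in [seq x + y | x <- Sp, y <- Sq].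
Proof.
move=> Hp Hq g; apply: contraNT => ng; apply/eqP; rewrite /fconv.
apply: fsbig1 => h _.
case: (eqVneq (p h) 0) => [->|/Hp hp]; first by rewrite mul0r.
case: (eqVneq (q (g - h)) 0) => [->|/Hq hq]; first by rewrite mulr0.
exfalso; move/negP: ng; apply.
by have := allpairs_f (fun x y => x + y) hp hq; rewrite /= addrC subrK.
Qed.

Lemma fdelta_conv (q : G -> C) : fconv (@fdelta0 R G) q = q.
Proof.
apply/funext => g; rewrite /fconv (fsumE _ ([:: 0])) //.
  by rewrite big_seq1 /fdelta0 eqxx mul1r subr0.
apply: supp_mull => h; rewrite /fdelta0; case: (h =P 0) => [->|_].
  by rewrite inE.
by rewrite eqxx.
Qed.

Lemma conv_assoc (p a q : G -> C) (Sp Sa Sq : seq G) :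
  (forall g, p g != 0 -> g \in Sp) -> (forall g, a g != 0 -> g \in Sa) ->
  (forall g, q g != 0 -> g \in Sq) -> forall g,
  \sum_(h \in [set: G]) a h * fconv p q (g - h) = fconv (fconv p a) q g.
Proof.
move=> Hp Ha Hq g.
have Hp' : forall g, p g != 0 -> g \in undup Sp by move=> x /Hp; rewrite mem_undup.
have Ha' : forall g, a g != 0 -> g \in undup Sa by move=> x /Ha; rewrite mem_undup.
set T := undup [seq x + y | x <- Sp, y <- Sa].
have HT : forall g, fconv p a g != 0 -> g \in T.
  by move=> x /(conv_supp _ _ _ _ Hp Ha); rewrite mem_undup.
rewrite (fsumE _ (undup Sa)) ?undup_uniq //; last first.
  by apply: (supp_mull _ (fun h => fconv p q (g - h))).
rewrite /fconv (fsumE _ (T)) ?undup_uniq //; last first.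
  by apply: (supp_mull _ (fun h => q (g - h))).
under eq_bigr => h _.
  rewrite (fsumE _ (undup Sp)) ?undup_uniq //; last first.
    by apply: (supp_mull _ (fun h' => q (g - h - h'))).
  rewrite big_distrr /=.
  over.
under [RHS]eq_bigr => k _.
  rewrite (fsumE _ (undup Sp)) ?undup_uniq //; last first.
    by apply: (supp_mull _ (fun h' => a (k - h'))).
  rewrite big_distrl /=.
  over.
rewrite /= [RHS](exchange_big).
rewrite [LHS](exchange_big).
apply: eq_bigr => h' _.
pose F := fun k => p h' * a (k - h') * q (g - k).
have E1 : \sum_(k <- T) F k = \sum_(k \in [set: G]) F k.
  apply/esym/fsumE; first exact: undup_uniq.
  move=> k; rewrite /F.
  case: (eqVneq (p h') 0) => [->|/Hp hp]; first by rewrite !mul0r eqxx.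
  case: (eqVneq (a (k - h')) 0) => [->|/Ha ha]; first by rewrite mulr0 mul0r eqxx.
  move=> _; rewrite mem_undup.
  by have := allpairs_f (fun x y => x + y) hp ha; rewrite /= addrC subrK.
have E2 : \sum_(k \in [set: G]) F k = \sum_(k <- [seq x + h' | x <- undup Sa]) F k.
  apply: fsumE.
    rewrite map_inj_uniq ?undup_uniq //; exact: (addIr h').
  move=> k; rewrite /F.
  case: (eqVneq (a (k - h')) 0) => [->|/Ha' ha]; first by rewrite mulr0 mul0r eqxx.
  move=> _; apply/mapP; exists (k - h') => //; by rewrite subrK.
rewrite E1 E2 big_map; apply: eq_bigr => h _; rewrite /F addrK opprD addrA.
by rewrite mulrCA mulrA.
Qed.

End Aux.
Arguments conv_supp {R G p q Sp Sq}.
Arguments conv_assoc {R G p a q Sp Sa Sq}.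

Theorem theorem2p6 (R : realType) (G : zmodType) (k : Seq R -> Prop)
  (hk : sigma_ring_with_constants_C k)
  (alpha : G -> Seq R) (halpha_k : forall g, k (alpha g))
  (halpha_fin : fin_supp_seq alpha) :
  ([/\ (* Sol_c(alpha, L^c) is a complex vector space, stable under G *)
      (forall (a : CC R) s1 s2, Sol_c k alpha s1 -> Sol_c k alpha s2 ->
         Sol_c k alpha (fun g t => a * s1 g t + s2 g t)),
      (forall h s, Sol_c k alpha s -> Sol_c k alpha (gact_sol s h)),
      (* F is C-linear *)
      (forall (a : CC R) (s1 s2 : G -> Seq R),
         fourier (fun g t => a * s1 g t + s2 g t)
         = (fun t g => a * fourier s1 t g + fourier s2 t g)),
      (* F is G-equivariant *)
      (forall (h : G) (s : G -> Seq R), fourier (gact_sol s h) = gact_four (fourier s) h) &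
      (* F is injective on Sol_c *)
      (forall s1 s2, Sol_c k alpha s1 -> Sol_c k alpha s2 ->
         fourier s1 = fourier s2 -> s1 = s2)] /\
      (* the image of Sol_c under F is (prod_{tau<t} hat alpha^{(tau)}) . C[e^{ig theta}] *)
      (forall P : nat -> G -> CC R,
         (exists s, Sol_c k alpha s /\ fourier s = P) <->
         (exists q : G -> CC R, fin_supp q /\
            P = (fun t => fconv (alpha_prod alpha t) q)))).
Proof.
case: halpha_fin => Sa HSa.
have Hah : forall t h, alpha h t != 0 -> h \in Sa.
  move=> t h nz; apply: HSa => E; move: nz; by rewrite E eqxx.
have Hah' : forall t h, alpha h t != 0 -> h \in undup Sa.
  by move=> t h /(Hah t); rewrite mem_undup.
have fsA : forall t (X : G -> CC R),
    \sum_(h \in [set: G]) alpha h t * X h = \sum_(h <- undup Sa) alpha h t * X h.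
  move=> t X; apply: fsumE; first exact: undup_uniq.
  move=> g; case: (eqVneq (alpha g t) 0) => [->|/Hah' //]; by rewrite mul0r eqxx.
have solE : forall s, is_solution alpha s ->
    forall g t, s g t.+1 = \sum_(h <- undup Sa) alpha h t * s (g - h) t.
  move=> s H g t; rewrite H; exact: fsA.
have solI : forall s, (forall g t, s g t.+1 = \sum_(h <- undup Sa) alpha h t * s (g - h) t) ->
    is_solution alpha s.
  move=> s H g t; rewrite H; symmetry; exact: fsA.
have LcS : forall s, fin_solution alpha s -> Sol_c k alpha s.
  by move=> s fs; split=> // g S _ _ HS; exact: HS.
have Hap : forall t, exists S : seq G, forall g, alpha_prod alpha t g != 0 -> g \in S.
  elim=> [|t [S HS]].
    exists [:: 0] => g; rewrite /= /fdelta0; case: (g =P 0) => [->|_].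
      by rewrite inE.
    by rewrite eqxx.
  exists [seq x + y | x <- S, y <- Sa] => g; exact: (@conv_supp _ _ _ (alpha_hat alpha t) _ _ HS (Hah t)).
have rec : forall q (Sq : seq G), (forall g, q g != 0 -> g \in Sq) -> forall t g,
    fconv (alpha_prod alpha t.+1) q g
    = \sum_(h \in [set: G]) alpha h t * fconv (alpha_prod alpha t) q (g - h).
  move=> q Sq Hq t g; case: (Hap t) => S HS.
  by rewrite /= -(@conv_assoc _ _ _ (alpha_hat alpha t) _ _ _ _ HS (Hah t) Hq).
split; first split.
- move=> a s1 s2 [[sol1 fin1] _] [[sol2 fin2] _]; apply: LcS; split.
    apply: solI => g t; rewrite (solE _ sol1) (solE _ sol2) big_distrr -big_split /=.
    by apply: eq_bigr => h _; rewrite mulrDr mulrCA.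
  move=> t; case: (fin1 t) => S1 H1; case: (fin2 t) => S2 H2.
  exists (S1 ++ S2) => g /= nz; rewrite mem_cat; apply: contraTT nz.
  rewrite negb_or => /andP[n1 n2].
  have z1 : s1 g t == 0 by apply: contraNT n1; exact: H1.
  have z2 : s2 g t == 0 by apply: contraNT n2; exact: H2.
  by rewrite (eqP z1) (eqP z2) mulr0 addr0 negbK.
- move=> h s [[sol fin] _]; apply: LcS; split.
    apply: solI => g t; rewrite /gact_sol (solE _ sol).
    by apply: eq_bigr => h' _; rewrite addrAC.
  move=> t; case: (fin t) => S H; exists [seq x + h | x <- S] => g nz.
  by apply/mapP; exists (g - h); [exact: H | rewrite subrK].
- by [].
- by [].
- move=> s1 s2 _ _ E; apply/funext => g; apply/funext => t.
  exact: (congr1 (fun P => P t g) E).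
move=> P; split.
  move=> [s [[[sol fin] _] <-]]; exists (fun g => s g 0); split; first exact: fin 0.
  case: (fin 0) => Sq Hq.
  apply/funext => t; apply/funext => g; rewrite /fourier.
  elim: t g => [|t IH] g; first by rewrite /= fdelta_conv.
  rewrite sol (rec _ Sq Hq); apply: eq_fsbigr => h _; by rewrite IH.
move=> [q [[Sq Hq] ->]].
exists (fun g t => fconv (alpha_prod alpha t) q g); split; last by [].
apply: LcS; split.
  move=> g t; exact: (rec _ Sq Hq t g).
move=> t; case: (Hap t) => S HS; exists [seq x + y | x <- S, y <- Sq].
exact: (conv_supp HS Hq).
Qed.
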